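(* Let $l,N\in\mathbb N$ and, for $1\le j\le l$, let $A^j$ and $B^j$ be real $N\times N$ matrices such that each $A^j$ is symmetric with eigenvalues $\{\lambda^j_k\}_{k=1}^N$ and all entries of each $B^j$ are nonnegative. Then $$\sum_{i_1,\dots,i_{2l}=1}^N\prod_{j=1}^l\big(|A^j_{i_{2j-1},i_{2j}}|\,B^j_{i_{2j},i_{2j+1}}\big)\le\prod_{j=1}^l\Big(\|B^j\|\sum_k|\lambda^j_k|\Big),$$ where $i_{2l+1}=i_1$ and $\|\cdot\|$ denotes the operator norm. *)

(* Defs.v *)
From HB Require Import structures.
From mathcomp Require Import all_boot all_order all_algebra.
From mathcomp Require Import classical_sets reals.
Set Implicit Arguments. Unset Strict Implicit. Unset Printing Implicit Defensive.
Import Order.TTheory GRing.Theory Num.Theory.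
Local Open Scope ring_scope.
Local Open Scope classical_set_scope.

Definition norm2 {R : realType} {N : nat} (x : 'cV[R]_N) : R :=
  Num.sqrt (\sum_(i < N) x i 0 ^+ 2).

Definition opnorm {R : realType} {N : nat} (B : 'M[R]_N) : R :=
  sup [set norm2 (B *m x) | x in [set x : 'cV[R]_N | norm2 x <= 1]].

(* Main.v *)
Require Import Defs.
From HB Require Import structures.
From mathcomp Require Import all_boot all_order all_algebra.
From mathcomp Require Import classical_sets reals.
From mathcomp Require Import ring lra complex sesquilinear spectral.
Import Order.TTheory GRing.Theory Num.Theory.
Local Open Scope ring_scope.

Set Implicit Arguments. Unset Strict Implicit. Unset Printing Implicit Defensive.

Section P3.
Variable R : realType.

Lemma cs_lite N (y z : 'I_N -> R) :
  \sum_i y i ^+ 2 <= 1 ->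
  \sum_i y i * z i <= Num.sqrt (\sum_i z i ^+ 2).
Proof.
move=> hy.
set S3 := \sum_i z i ^+ 2.
have S3ge : 0 <= S3 by apply: sumr_ge0 => i _; exact: sqr_ge0.
set t := Num.sqrt S3.
have tge : 0 <= t by exact: sqrtr_ge0.
have tt : t ^+ 2 = S3 by rewrite sqr_sqrtr.
have [t0|tpos] := eqVneq t 0.
  have S30 : S3 = 0 by rewrite -tt t0 expr0n.
  have z0 : forall i, z i = 0.
    move=> i; apply/eqP; rewrite -sqrf_eq0; apply/eqP.
    move/eqP: S30; rewrite psumr_eq0 => [/allP H|]; last by move=> ? _; exact: sqr_ge0.
    by apply/eqP; apply: (H i); rewrite mem_index_enum.
  by rewrite big1 ?t0 // => i _; rewrite z0 mulr0.
have tp : 0 < t by rewrite lt_def tpos tge.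
have key : 2 * t * (\sum_i y i * z i) <= t ^+ 2 * (\sum_i y i ^+ 2) + S3.
  rewrite /S3 !mulr_sumr -big_split /=; apply: ler_sum => i _.
  have := sqr_ge0 (t * y i - z i).
  have -> : (t * y i - z i) ^+ 2 = t ^+ 2 * y i ^+ 2 + z i ^+ 2 - 2 * t * (y i * z i) by ring.
  by rewrite subr_ge0.
set S1 := \sum_i y i * z i.
set S2 := \sum_i y i ^+ 2.
move: key; rewrite -/S1 -/S2 => key.
have h1 : t ^+ 2 * S2 <= t ^+ 2 by rewrite ler_piMr // sqr_ge0.
have h2 : t * S1 <= t * t by rewrite -expr2; lra.
by rewrite -(ler_pM2l tp).
Qed.


Lemma norm2_le1 N (x : 'cV[R]_N) : norm2 x <= 1 -> \sum_i x i 0 ^+ 2 <= 1.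
Proof. by rewrite /norm2 -{1}sqrtr1 ler_sqrt. Qed.

Lemma opnorm_ub N (B : 'M[R]_N) (x : 'cV[R]_N) :
  norm2 x <= 1 -> norm2 (B *m x) <= opnorm B.
Proof.
move=> hx; rewrite /opnorm.
apply: sup_upper_bound; last by exists x.
  split; first by exists (norm2 (B *m x)); exists x.
  set M := \sum_b \sum_a `|B b a|.
  exists (Num.sqrt (N%:R * M ^+ 2)) => _ [y hy <-].
  rewrite /norm2 ler_sqrt; last by rewrite mulr_ge0 ?sqr_ge0.
  have hy1 := norm2_le1 hy.
  have hya : forall a, `|y a 0| <= 1.
    move=> a; have : y a 0 ^+ 2 <= 1.
      apply: le_trans hy1.
      rewrite (bigD1 a) //= lerDl; apply: sumr_ge0 => i _; exact: sqr_ge0.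
    rewrite -real_normK ?num_real // => h.
    have := normr_ge0 (y a 0); nra.
  have Mge : 0 <= M by apply: sumr_ge0 => b _; apply: sumr_ge0 => a _.
  apply: (@le_trans _ _ (\sum_(b < N) M ^+ 2)); last first.
    by rewrite sumr_const card_ord mulr_natl.
  apply: ler_sum => b _.
  have hb : `|(B *m y) b 0| <= M.
    rewrite mxE; apply: le_trans (ler_norm_sum _ _ _) _.
    apply: (@le_trans _ _ (\sum_a `|B b a|)).
      apply: ler_sum => a _; rewrite normrM.
      by rewrite ler_piMr ?normr_ge0.
    rewrite /M [X in _ <= X](bigD1 b) //= lerDl; apply: sumr_ge0 => i _; apply: sumr_ge0 => ? _; exact: normr_ge0.
  have h := real_normK (num_real ((B *m y) b 0)).
  have := normr_ge0 ((B *m y) b 0); nra.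
Qed.


Lemma bilin N (B : 'M[R]_N) (u v : 'I_N -> R) :
  \sum_i u i ^+ 2 <= 1 -> \sum_i v i ^+ 2 <= 1 ->
  \sum_(x : 'I_N * 'I_N) u x.1 * B x.1 x.2 * v x.2 <= opnorm B.
Proof.
move=> hu hv.
pose vc : 'cV[R]_N := \col_a v a.
have hvc : norm2 vc <= 1.
  rewrite /norm2 -sqrtr1 ler_sqrt //.
  by under eq_bigr do rewrite mxE.
apply: le_trans (opnorm_ub B hvc).
rewrite -(pair_bigA _ (fun b a => u b * B b a * v a)) /=.
have -> : \sum_b \sum_a u b * B b a * v a = \sum_b u b * (B *m vc) b 0.
  apply: eq_bigr => b _; rewrite mxE mulr_sumr; apply: eq_bigr => a _.
  by rewrite mxE mulrA.
exact: cs_lite.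
Qed.


Lemma cyclic_bound l N (B : 'I_l -> 'M[R]_N) (W : 'I_l -> 'I_N -> R)
  (hB : forall j a b, 0 <= B j a b) (hW : forall j a, 0 <= W j a)
  (hW1 : forall j, \sum_a W j a ^+ 2 <= 1) :
  \sum_(p : {ffun 'I_l -> 'I_N * 'I_N})
     \prod_(j < l) (W j (p j).1 * W j (p j).2 * B j (p j).2 (p (ordS j)).1)
  <= \prod_(j < l) opnorm (B j).
Proof.
pose h (j : 'I_l) (x : 'I_N * 'I_N) := W j x.1 * B j x.1 x.2 * W (ordS j) x.2.
pose phi (p : {ffun 'I_l -> 'I_N * 'I_N}) : {ffun 'I_l -> 'I_N * 'I_N} :=
  [ffun j => ((p j).2, (p (ordS j)).1)].
pose psi (q : {ffun 'I_l -> 'I_N * 'I_N}) : {ffun 'I_l -> 'I_N * 'I_N} :=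
  [ffun j => ((q (ord_pred j)).2, (q j).1)].
have phiK : cancel phi psi.
  move=> p; apply/ffunP => j; rewrite !ffunE /= ord_predK.
  by case: (p j).
have psiK : cancel psi phi.
  move=> q; apply/ffunP => j; rewrite !ffunE /= ordSK.
  by case: (q j).
have eq1 : forall p : {ffun 'I_l -> 'I_N * 'I_N},
  \prod_(j < l) (W j (p j).1 * W j (p j).2 * B j (p j).2 (p (ordS j)).1)
  = \prod_(j < l) h j (phi p j).
  move=> p.
  rewrite /h /phi.
  under [RHS]eq_bigr do rewrite ffunE /=.
  rewrite [RHS]big_split /=.
  under eq_bigr do rewrite -mulrA.
  rewrite big_split /= mulrC; congr (_ * _).
  by rewrite (reindex_inj (@ordS_inj l)).
under eq_bigr do rewrite eq1.
rewrite -(reindex phi (P := xpredT) (F := fun q => \prod_(j < l) h j (q j))); last first.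
  by exists psi => ? _.
rewrite -(bigA_distr_bigA (fun j x => h j x)) /=.
apply: ler_prod => j _; apply/andP; split.
  by apply: sumr_ge0 => x _; rewrite /h !mulr_ge0.
exact: bilin.
Qed.


Lemma main_comb l N (A B : 'I_l -> 'M[R]_N) (c : 'I_l -> 'I_N -> R)
  (w : 'I_l -> 'I_N -> 'I_N -> R)
  (hc : forall j k, 0 <= c j k) (hw : forall j k a, 0 <= w j k a)
  (hw1 : forall j k, \sum_a w j k a ^+ 2 <= 1)
  (hA : forall j a b, `|A j a b| <= \sum_k c j k * w j k a * w j k b)
  (hB : forall j a b, 0 <= B j a b) :
  \sum_(p : {ffun 'I_l -> 'I_N * 'I_N})
     \prod_(j < l) (`|A j (p j).1 (p j).2| * B j (p j).2 (p (ordS j)).1)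
  <= \prod_(j < l) (opnorm (B j) * \sum_(k < N) c j k).
Proof.
apply: (@le_trans _ _ (\sum_(p : {ffun 'I_l -> 'I_N * 'I_N})
     \prod_(j < l) \sum_k (c j k * w j k (p j).1 * w j k (p j).2 *
          B j (p j).2 (p (ordS j)).1))).
  apply: ler_sum => p _; apply: ler_prod => j _.
  rewrite mulr_ge0 ?normr_ge0 //= -mulr_suml.
  by rewrite ler_wpM2r.
under eq_bigr do rewrite bigA_distr_bigA /=.
rewrite exchange_big /=.
rewrite big_split /= (bigA_distr_bigA (fun j k => c j k)) mulr_sumr.
apply: ler_sum => kap _.
have E : forall p : {ffun 'I_l -> 'I_N * 'I_N},
  \prod_(j < l) (c j (kap j) * w j (kap j) (p j).1 * w j (kap j) (p j).2 *
          B j (p j).2 (p (ordS j)).1) =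
  \prod_(j < l) c j (kap j) *
  \prod_(j < l) (w j (kap j) (p j).1 * w j (kap j) (p j).2 *
          B j (p j).2 (p (ordS j)).1).
  move=> p; rewrite -big_split /=; apply: eq_bigr => j _; by rewrite !mulrA.
under eq_bigr => p _ do rewrite E.
rewrite -mulr_sumr mulrC ler_wpM2r //.
  exact: (prodr_ge0 _ (fun j _ => hc j (kap j))).
have := @cyclic_bound l N B (fun j => w j (kap j)) hB (fun j => hw j (kap j)) (fun j => hw1 j (kap j)).
by [].
Qed.

End P3.

Section P4.
Variable R : realType.
Local Notation C := (R[i]).
Local Notation RC := (real_complex R).

Definition nr (z : C) : R := complex.Re `|z|.

Lemma nrE z : RC (nr z) = `|z|.
Proof. by rewrite /nr RRe_real // normr_real. Qed.

Lemma nrE' z : (RC : {rmorphism R -> C}) (nr z) = `|z|.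
Proof. exact: nrE. Qed.

Lemma nr_ge0 z : 0 <= nr z.
Proof. by rewrite -ler0c nrE. Qed.

Lemma norm_RC (x : R) : `|RC x| = RC `|x|.
Proof. by rewrite normc_def /= expr0n /= addr0 sqrtr_sqr. Qed.

Lemma norm_RC' (x : R) : `|RC x| = (RC : {rmorphism R -> C}) `|x|.
Proof. exact: norm_RC. Qed.

Lemma RC_real (x : R) : RC x \is Num.real.
Proof. by apply/complex_realP; exists x. Qed.

Lemma conj_RC (x : R) : (RC x)^* = RC x.
Proof. exact/CrealP/RC_real. Qed.

Lemma char_poly_similar n (P D : 'M[C]_n) : P \in unitmx ->
  char_poly (invmx P *m D *m P) = char_poly D.
Proof.
move=> Pu; rewrite /char_poly /char_poly_mx.
have e1 : map_mx polyC (invmx P) *m map_mx polyC P = 1%:M.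
  by rewrite -map_mxM mulVmx // map_mx1.
have -> : ('X%:M - map_mx polyC (invmx P *m D *m P) : 'M[{poly C}]_n) =
   map_mx polyC (invmx P) *m ('X%:M - map_mx polyC D) *m map_mx polyC P.
  rewrite mulmxBr mulmxBl !map_mxM; congr (_ - _).
  by rewrite scalar_mxC -mulmxA e1 mulmx1.
have e2 : map_mx polyC P *m map_mx polyC (invmx P) = 1%:M.
  by rewrite -map_mxM mulmxV // map_mx1.
by rewrite !det_mulmx mulrC mulrA -det_mulmx e2 det1 mul1r.
Qed.


Local Open Scope sesquilinear_scope.

Lemma decomp N (A : 'M[R]_N) (lam : 'I_N -> R) :
  A^T = A -> char_poly A = \prod_(k < N) ('X - (lam k)%:P) ->
  let Ac := map_mx RC A in
  let P := spectralmx Ac in let d := spectral_diag Ac in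
  [/\ forall k, \sum_a nr (P k a) ^+ 2 <= 1,
      forall a b, `|A a b| <= \sum_k nr (d 0 k) * nr (P k a) * nr (P k b) &
      \sum_k nr (d 0 k) = \sum_k `|lam k| ].
Proof.
move=> hsym hchar Ac P d.
have AcT : Ac ^t* = Ac.
  apply/matrixP => i j; rewrite !mxE conj_RC.
  by rewrite -[in RHS]hsym mxE.
have Anorm : Ac \is normalmx by apply/normalmxP; rewrite AcT.
have hspec : Ac = invmx P *m diag_mx d *m P by apply/orthomx_spectralP.
have Pun : P \is unitarymx := spectral_unitarymx Ac.
have Pu : P \in unitmx := spectral_unit Ac.
split.
- move=> k.
  have /matrixP/(_ k k) := unitarymxP Pun.
  rewrite !mxE eqxx /= => h1.
  suff : RC (\sum_a nr (P k a) ^+ 2) = 1 by move=> /complexI ->.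
  rewrite rmorph_sum; apply: (etrans _ h1); apply: eq_bigr => a _.
  by rewrite rmorphXn nrE' normCK !mxE.
- move=> a b.
  have Aab : RC (A a b) = \sum_k (P k a)^* * d 0 k * P k b.
    have /matrixP/(_ a b) := hspec.
    rewrite /= mxE => ->; rewrite invmx_unitary // mul_mx_diag.
    by rewrite mxE; apply: eq_bigr => k _; rewrite !mxE.
  rewrite -lecR -norm_RC Aab rmorph_sum.
  apply: le_trans (ler_norm_sum _ _ _) _; apply: ler_sum => k _.
  by rewrite !rmorphM !nrE' !normrM norm_conjC (mulrC `|P k a|).
- have cA : char_poly Ac = \prod_(k < N) ('X - (RC (lam k))%:P).
    rewrite -map_char_poly hchar rmorph_prod; apply: eq_bigr => k _.
    exact: map_polyXsubC.
  have cD : char_poly Ac = \prod_(k < N) ('X - (d 0 k)%:P).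
    rewrite [in LHS]hspec char_poly_similar // char_poly_trig ?diag_mx_is_trig //.
    by apply: eq_bigr => k _; rewrite mxE eqxx mulr1n.
  have pe : perm_eq [seq d 0 k | k <- index_enum 'I_N] [seq RC (lam k) | k <- index_enum 'I_N].
    by apply: prod_XsubC_eq; rewrite !big_map -cA -cD.
  apply: complexI; rewrite !rmorph_sum.
  under eq_bigr do rewrite nrE'.
  under [RHS]eq_bigr do rewrite -norm_RC'.
  rewrite -(big_map (fun k => d 0 k) xpredT (fun x => `|x|)).
  rewrite -(big_map (fun k => RC (lam k)) xpredT (fun x => `|x|)).
  exact: perm_big.
Qed.

End P4.

Unset Implicit Arguments.

Theorem lemma10 (R : realType) (l N : nat)
    (A B : 'I_l -> 'M[R]_N) (lam : 'I_l -> 'I_N -> R)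
    (hAsym : forall j, (A j)^T = A j)
    (hAeig : forall j, char_poly (A j) = \prod_(k < N) ('X - (lam j k)%:P))
    (hBnn : forall j a b, 0 <= B j a b) :
  \sum_(p : {ffun 'I_l -> 'I_N * 'I_N})
     \prod_(j < l) (`|A j (p j).1 (p j).2| * B j (p j).2 (p (ordS j)).1)
  <= \prod_(j < l) (opnorm (B j) * \sum_(k < N) `|lam j k|).
Proof.
pose c j k := nr (spectral_diag (map_mx (real_complex R) (A j)) 0 k).
pose w j k a := nr (spectralmx (map_mx (real_complex R) (A j)) k a).
have D j := decomp (hAsym j) (hAeig j).
have -> : \prod_(j < l) (opnorm (B j) * \sum_(k < N) `|lam j k|)
        = \prod_(j < l) (opnorm (B j) * \sum_(k < N) c j k).
  by apply: eq_bigr => j _; case: (D j) => _ _ ->.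
apply: (main_comb (c := c) (w := w)) => //.
- by move=> j k; exact: nr_ge0.
- by move=> j k a; exact: nr_ge0.
- by move=> j k; case: (D j) => H _ _; exact: H.
- by move=> j a b; case: (D j) => _ H _; exact: H.
Qed.
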